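(* Let $K\subset\mathbb{C}^2$ be compact, nonpluripolar, and satisfy $e^{i\theta}\circ K=K$ for all $\theta\in\mathbb{R}$. Let $\theta\in\mathcal{C}$ and let $\{Q_n\}$, $Q_n\in M^{\prec_C}_{k_n}(\alpha_n)$, be $\theta$-asymptotically Chebyshev for $K$. Then $\{\widehat Q_n\}$ is $\theta$-asymptotically Chebyshev for $K$, where $\widehat Q_n$ is the top part of $Q_n$ relative to $Poly(k_nC)$.
   Context: $a,b$ relatively prime positive integers; $C$ the triangle with vertices $(0,0),(b,0),(0,a)$; $Poly(kC)$ is the space of $p=\sum_{aj+bl\le kab}c_{jl}z_1^jz_2^l$ with top part $\widehat p=\sum_{aj+bl=kab}c_{jl}z_1^jz_2^l$; $\deg_C(p)=\min\{k:p\in Poly(kC)\}$. $\lambda\circ(z_1,z_2)=(\lambda^az_1,\lambda^bz_2)$. Order $\prec_C$: $\alpha\prec_C\beta$ if $\deg_C(z^\alpha)<\deg_C(z^\beta)$, or equal $C$-degrees and $\alpha_2<\beta_2$. $M^{\prec_C}_k(\alpha)=\{p\in Poly(kC):p=z^\alpha+\sum_{\beta\prec_C\alpha}c_\beta z^\beta\}$; $T^C_k(K,\alpha)=\inf\{\|p\|_K:p\in M^{\prec_C}_k(\alpha)\}^{1/k}$. $\mathcal{C}=\{\phi:a\phi_1+b\phi_2=ab,\ \phi_1\phi_2>0\}$. For $\theta\in\mathcal{C}$, $\tau(K,\theta)=\lim_{k\to\infty,\alpha/k\to\theta}T^C_k(K,\alpha)$ (this limit exists). $\{Q_n\}$ is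 $\theta$-asymptotically Chebyshev for $K$ if $Q_n\in M^{\prec_C}_{k_n}(\alpha_n)$ with $k_n\to\infty$, $\alpha_n/k_n\to\theta$, and $\|Q_n\|_K^{1/k_n}\to\tau(K,\theta)$. *)

(* Defs.v *)
From mathcomp Require Import all_boot all_order all_algebra.
From mathcomp Require Import all_classical all_reals all_analysis.
From mathcomp Require Import complex.
Set Implicit Arguments.
Unset Strict Implicit.
Unset Printing Implicit Defensive.
Import Order.TTheory GRing.Theory Num.Theory.
Import numFieldNormedType.Exports.
Local Open Scope classical_set_scope.
Local Open Scope ring_scope.

Section Defs.
Variable R : realType.
Local Notation C := (R[i]).

Definition cmod (z : C) : R := Num.sqrt (complex.Re z ^+ 2 + complex.Im z ^+ 2).

Definition cexpi (t : R) : C := (cos t +i* sin t)%C.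

(* the topology of C^2 is that of R^4: identification map *)
Definition toR4 (z : C * C) : (R * R) * (R * R) :=
  ((complex.Re z.1, complex.Im z.1), (complex.Re z.2, complex.Im z.2)).

Definition compactC2 (K : set (C * C)) : Prop :=
  @compact ((R * R) * (R * R))%type (toR4 @` K).

Definition cdist (z w : C * C) : R := Num.max (cmod (z.1 - w.1)) (cmod (z.2 - w.2)).

Definition usc (u : C * C -> \bar R) : Prop :=
  forall (z : C * C) (t : R), (u z < t%:E)%E ->
    exists2 r : R, 0 < r & forall w, cdist w z < r -> (u w < t%:E)%E.

(* plurisubharmonic on C^2: usc, never +oo, and its restriction to every complex
   line lambda |-> z + lambda w satisfies the sub-mean value inequality on every
   circle (centre 0, radius |w| in the parameter). *)
Definition psh (u : C * C -> \bar R) : Prop :=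
  [/\ forall z, u z != +oo%E,
      usc u &
      forall z w : C * C,
        (u z <= ((2 * pi)^-1)%:E *
           \int[(@lebesgue_measure R)]_(t in `[0%R, (2 * pi)%R]%classic)
              u ((z.1 + cexpi t * w.1)%R, (z.2 + cexpi t * w.2)%R))%E].

Definition pluripolar (E : set (C * C)) : Prop :=
  exists u : C * C -> \bar R,
    [/\ psh u, exists z, u z != -oo%E & forall z, E z -> u z = -oo%E].

Variables a b : nat.

(* a polynomial in z1, z2 is given by its (finitely supported) coefficient
   function (j, l) |-> c_{jl}; the coefficient of z1^j z2^l. *)
Definition cpoly := nat -> nat -> C.

Definition inPoly (k : nat) (p : cpoly) : Prop :=
  forall j l, p j l != 0 -> (a * j + b * l <= k * (a * b))%N.

(* evaluation of p (assumed in Poly(kC), so its support is in the box) *)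
Definition peval (k : nat) (p : cpoly) (z : C * C) : C :=
  \sum_(j < (k * b).+1) \sum_(l < (k * a).+1) p j l * z.1 ^+ j * z.2 ^+ l.

Definition top (k : nat) (p : cpoly) : cpoly :=
  fun j l => if (a * j + b * l == k * (a * b))%N then p j l else 0.

(* deg_C(z^beta) = min {k : z^beta in Poly(kC)} = ceil((a b1 + b b2)/(ab)) *)
Definition degC (beta : nat * nat) : nat :=
  ((a * beta.1 + b * beta.2) + (a * b).-1) %/ (a * b).

Definition precC (al be : nat * nat) : bool :=
  (degC al < degC be)%N || ((degC al == degC be) && (al.2 < be.2)%N).

Definition inM (k : nat) (al : nat * nat) (p : cpoly) : Prop :=
  [/\ inPoly k p, p al.1 al.2 = 1 &
      forall j l, p j l != 0 -> (j, l) = al \/ precC (j, l) al].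

Definition supnorm (K : set (C * C)) (k : nat) (p : cpoly) : R :=
  sup [set cmod (peval k p z) | z in K].

Definition Tch (K : set (C * C)) (k : nat) (al : nat * nat) : R :=
  powR (inf [set supnorm K k p | p in [set p | inM k al p]]) (k%:R^-1).

Definition inCC (phi : R * R) : Prop :=
  a%:R * phi.1 + b%:R * phi.2 = (a * b)%:R /\ 0 < phi.1 * phi.2.

Definition topidx (k : nat) (al : nat * nat) : Prop :=
  (a * al.1 + b * al.2)%N = (k * (a * b))%N.

Definition is_tau (K : set (C * C)) (th : R * R) (L : R) : Prop :=
  forall e : R, 0 < e -> exists N : nat, exists2 d : R, 0 < d &
    forall (k : nat) (al : nat * nat), (N <= k)%N -> topidx k al ->
      `|al.1%:R / k%:R - th.1| < d -> `|al.2%:R / k%:R - th.2| < d ->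
      `|Tch K k al - L| < e.

(* tau(K, theta): the limit (which exists by the paper) *)
Definition tau (K : set (C * C)) (th : R * R) : R := xget 0 (is_tau K th).

Definition asympCheb (K : set (C * C)) (th : R * R)
    (k : nat -> nat) (al : nat -> nat * nat) (Q : nat -> cpoly) : Prop :=
  [/\ forall n, inM (k n) (al n) (Q n),
      forall n, topidx (k n) (al n),
      forall N : nat, exists n0, forall n, (n0 <= n)%N -> (N <= k n)%N,
      ((fun n => (al n).1%:R / (k n)%:R : R) @ \oo --> th.1 /\
       (fun n => (al n).2%:R / (k n)%:R : R) @ \oo --> th.2) &
      (fun n => powR (supnorm K (k n) (Q n)) ((k n)%:R^-1)) @ \oo --> tau K th].

End Defs.

(* Main.v *)
Require Import Defs.
From mathcomp Require Import all_boot all_order all_algebra.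
From mathcomp Require Import all_classical all_reals all_analysis.
From mathcomp Require Import complex.
From mathcomp Require Import ring lra zify.
Import Order.TTheory GRing.Theory Num.Theory.
Import numFieldNormedType.Exports.
Local Open Scope classical_set_scope.
Local Open Scope ring_scope.
Section T.
Variable R : realType.

Local Notation C := (R[i]).
Lemma cm (z : C) : `|z| = ((cmod z)%:C)%C.
Proof. by case: z. Qed.
Lemma cmod_ge0 (z : C) : 0 <= cmod z.
Proof. exact: sqrtr_ge0. Qed.
Lemma cmodM (x y : C) : cmod (x * y) = cmod x * cmod y.
Proof.
have := normrM x y; rewrite !cm => /(congr1 (@complex.Re R)) /= ->.
by rewrite mulr0 subr0.
Qed.
Lemma cmodD (x y : C) : cmod (x + y) <= cmod x + cmod y.
Proof. by have := ler_normD x y; rewrite !cm lecE /= => /andP[]. Qed.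
Lemma cmodX (x : C) n : cmod (x ^+ n) = cmod x ^+ n.
Proof.
elim: n => [|n IH]; last by rewrite !exprS cmodM IH.
by rewrite !expr0 /cmod /= expr0n /= addr0 expr1n sqrtr1.
Qed.
Lemma cmod_nat n : cmod (n%:R : C) = n%:R.
Proof. have := normr_nat C n. rewrite cm. move=> h. have := congr1 (@complex.Re R) h. simpl. move=> ->.
 elim: n {h} => // n IH. rewrite !mulrS -IH. by case: (n%:R : C). Qed.
Lemma cmod_sum I (r : seq I) (P : pred I) (F : I -> C) :
  cmod (\sum_(i <- r | P i) F i) <= \sum_(i <- r | P i) cmod (F i).
Proof.
elim/big_ind2 : _ => //.
  by rewrite /cmod /= expr0n /= addr0 sqrtr0.
move=> x1 x2 y1 y2 h1 h2; apply: le_trans (cmodD _ _) _; exact: lerD.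
Qed.
Definition cexpi' := @cexpi R.
Lemma cexpiD x y : cexpi x * cexpi y = cexpi (x + y) :> C.
Proof. rewrite /cexpi /= cosD sinD. congr (_ +i* _)%C. ring. Qed.
Lemma cexpiMn x n : cexpi x ^+ n = cexpi (x *+ n) :> C.
Proof.
elim: n => [|n IH]; first by rewrite expr0 mulr0n /cexpi cos0 sin0.
by rewrite exprS IH cexpiD mulrS.
Qed.
Lemma cmod_cexpi t : cmod (cexpi t : C) = 1.
Proof. by rewrite /cmod /cexpi /= cos2Dsin2 sqrtr1. Qed.
Lemma cexpi2pi : cexpi (pi *+ 2) = 1 :> C.
Proof. by rewrite /cexpi cos2pi sin2pi. Qed.
Lemma cexpi_neq1 y : 0 < y < pi *+ 2 -> cexpi y != 1 :> C.
Proof.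
move=> /andP[y0 y2]; apply/negP => /eqP [].
have -> : y = y / 2 + y / 2 by rewrite -splitr.
rewrite cosD => h _.
have s0 : 0 < sin (y / 2).
  apply: sin_gt0_pi; rewrite divr_gt0 //= ltr_pdivrMr // mulr_natr //.
have : cos (y/2) ^+ 2 + sin (y/2) ^+ 2 = 1 := cos2Dsin2 _.
move: h; rewrite -!expr2. move=> h1 h2.
have : sin (y/2) ^+ 2 = 0 by lra.
by move/eqP; rewrite sqrf_eq0 gt_eqF.
Qed.
Section Main.
Variables (a b : nat) (a_gt0 : (0 < a)%N) (b_gt0 : (0 < b)%N).
Definition NN k := (k * (a * b)).+1.
Definition zeta k : C := cexpi (pi *+ 2 / (NN k)%:R).
Definition act k m (z : C * C) := ((zeta k ^+ a) ^+ m * z.1, (zeta k ^+ b) ^+ m * z.2).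

Lemma zetaN k : zeta k ^+ NN k = 1.
Proof.
rewrite /zeta cexpiMn -[_ *+ NN k]mulr_natr divfK ?cexpi2pi // pnatr_eq0 //.
Qed.

Lemma zeta_neq1 k r : (0 < r < NN k)%N -> zeta k ^+ r != 1.
Proof.
move=> /andP[r0 rN]; rewrite /zeta cexpiMn; apply: cexpi_neq1.
have N0 : (0 : R) < (NN k)%:R by rewrite ltr0n.
rewrite -[_ *+ r]mulr_natr mulrAC divr_gt0 ?mulr_gt0 ?ltr0n ?pi_gt0 //=.
rewrite ltr_pdivrMr // ltr_pM2l ?ltr_nat //.
all: by rewrite mulrn_wgt0 // pi_gt0.
Qed.

Lemma geom_sum k d : (d <= k * (a * b))%N ->
  \sum_(m < NN k) (zeta k ^+ d.+1) ^+ m =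
  if d == k * (a * b) then (NN k)%:R else 0.
Proof.
move=> dle; case: eqP => [->|dne].
  by rewrite zetaN; under eq_bigr do rewrite expr1n; rewrite sumr_const card_ord.
have x1 : zeta k ^+ d.+1 != 1 by apply: zeta_neq1; rewrite /NN; apply/andP; split => //; lia.
have xN : (zeta k ^+ d.+1) ^+ NN k = 1 by rewrite exprAC zetaN expr1n.
have := subrX1 (zeta k ^+ d.+1) (NN k); rewrite xN subrr => /esym/eqP.
by rewrite mulf_eq0 subr_eq0 (negbTE x1) /= => /eqP.
Qed.

Lemma peval_top k p (z : C * C) : inPoly a b k p ->
  (NN k)%:R * peval a b k (top a b k p) z =
  \sum_(m < NN k) zeta k ^+ m * peval a b k p (act k m z).
Proof.
move=> hp; rewrite /peval mulr_sumr.
under [RHS]eq_bigr => m _ do rewrite mulr_sumr.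
rewrite exchange_big /=; apply: eq_bigr => j _.
rewrite mulr_sumr.
under [RHS]eq_bigr => m _ do rewrite mulr_sumr.
rewrite exchange_big /=; apply: eq_bigr => l _.
transitivity (\sum_(m < NN k) (p j l * z.1 ^+ j * z.2 ^+ l) * (zeta k ^+ (a * j + b * l).+1) ^+ m); last first.
  apply: eq_bigr => m _; rewrite !exprMn -!exprM.
  rewrite (_ : ((a * j + b * l).+1 * m = m + (a * m * j) + (b * m * l))%N); last by lia.
  rewrite !exprD; ring.
rewrite -mulr_sumr.
have [p0|pn0] := eqVneq (p j l) 0.
  by rewrite /top; case: eqP => _; rewrite ?p0 !mul0r mulr0.
rewrite geom_sum; last exact: hp.
by rewrite /top; case: eqP => _; rewrite ?mul0r ?mulr0 //; ring.
Qed.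

Lemma K_act (K : set (C * C))
  (K_inv : forall t : R,
      [set ((cexpi t) ^+ a * z.1, (cexpi t) ^+ b * z.2) | z in K] = K)
  k m z : K z -> K (act k m z).
Proof.
move=> Kz; elim: m => [|m IH].
  by rewrite /act !expr0 !mul1r; case: z Kz.
rewrite -(K_inv (pi *+ 2 / (NN k)%:R)); exists (act k m z) => //.
by rewrite /act /= !exprS !mulrA.
Qed.

Lemma top_le k p z (S : R) : inPoly a b k p ->
  (forall m, cmod (peval a b k p (act k m z)) <= S) ->
  cmod (peval a b k (top a b k p) z) <= S.
Proof.
move=> hp hS.
have N0 : (0 : R) < (NN k)%:R by rewrite ltr0n.
rewrite -(ler_pM2l N0) -{1}(cmod_nat (NN k)) -cmodM peval_top //.
apply: le_trans (cmod_sum _ _ _ _) _.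
have -> : (NN k)%:R * S = \sum_(m < NN k) S by rewrite sumr_const card_ord mulr_natl.
apply: ler_sum => m _; rewrite cmodM cmodX cmod_cexpi expr1n mul1r; exact: hS.
Qed.

Lemma cmod_le_ReIm (z : C) : cmod z <= `|complex.Re z| + `|complex.Im z|.
Proof.
case: z => x y.
have -> : (x +i* y)%C = ((x +i* 0) + (0 +i* y))%C by simpc.
apply: le_trans (cmodD _ _) _.
by rewrite /cmod /= !expr2 !mul0r !addr0 !add0r -!expr2 !sqrtr_sqr.
Qed.

Lemma K_bounded (K : set (C * C)) : compactC2 K ->
  exists B : R, 0 <= B /\ forall z, K z -> cmod z.1 <= B /\ cmod z.2 <= B.
Proof.
move=> Kc; have := compact_bounded Kc => -[M [Mreal HM]].
have hx : M < `|M| + 1 by rewrite (le_lt_trans (real_ler_norm Mreal)) // ltrDl.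
have := HM _ hx => H.
exists ((`|M| + 1) *+ 2); split; first by rewrite mulrn_wge0 // addr_ge0.
move=> z Kz; have := H (toR4 z) (ex_intro2 _ _ z Kz erefl).
rewrite /= !prod_normE /= !ge_max => /andP[/andP[h1 h2] /andP[h3 h4]].
split; apply: le_trans (cmod_le_ReIm _) _; rewrite mulr2n; exact: lerD.
Qed.

Lemma peval_bound k p (B : R) (z : C * C) : 0 <= B ->
  cmod z.1 <= B -> cmod z.2 <= B ->
  cmod (peval a b k p z) <=
  \sum_(j < (k * b).+1) \sum_(l < (k * a).+1) cmod (p j l) * B ^+ j * B ^+ l.
Proof.
move=> B0 h1 h2; apply: le_trans (cmod_sum _ _ _ _) _; apply: ler_sum => j _.
apply: le_trans (cmod_sum _ _ _ _) _; apply: ler_sum => l _.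
rewrite !cmodM !cmodX; apply: ler_pM.
- by rewrite mulr_ge0 ?exprn_ge0 ?cmod_ge0.
- by rewrite exprn_ge0 ?cmod_ge0.
- apply: ler_wpM2l; first exact: cmod_ge0.
  by apply: lerXn2r => //; rewrite nnegrE ?cmod_ge0.
- by apply: lerXn2r => //; rewrite nnegrE ?cmod_ge0.
Qed.

Lemma sup_ge0 (S : set R) : (forall x, S x -> 0 <= x) -> 0 <= sup S.
Proof.
move=> HS; case: (pselect (has_sup S)) => [[[x Sx] hub]|nh]; last by rewrite sup_out.
exact: le_trans (HS x Sx) (ub_le_sup hub Sx).
Qed.

End Main.
End T.

Theorem proposition8p1 (R : realType) (a b : nat)
  (a_gt0 : (0 < a)%N) (b_gt0 : (0 < b)%N) (ab_coprime : coprime a b)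
  (K : set (R[i] * R[i]))
  (K_compact : compactC2 K)
  (K_nonpp : ~ pluripolar K)
  (K_inv : forall t : R,
      [set ((cexpi t) ^+ a * z.1, (cexpi t) ^+ b * z.2) | z in K] = K)
  (th : R * R) (th_C : inCC a b th)
  (k : nat -> nat) (al : nat -> nat * nat) (Q : nat -> cpoly R)
  (HQ : asympCheb a b K th k al Q) :
  asympCheb a b K th k al (fun n => top a b (k n) (Q n)).
Proof.
case: HQ => HM Htop Hk [Hth1 Hth2] Hcv.
have [B [B0 HB]] := @K_bounded R K K_compact.
have ub kk p : has_ubound [set cmod (peval a b kk p z) | z in K].
  exists (\sum_(j < (kk * b).+1) \sum_(l < (kk * a).+1) cmod (p j l) * B ^+ j * B ^+ l).
  move=> _ [z Kz <-]; have [h1 h2] := HB z Kz; exact: peval_bound.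
have Hge0 kk p : 0 <= supnorm a b K kk p.
  by apply: sup_ge0 => _ [z _ <-]; exact: cmod_ge0.
have Hle n : supnorm a b K (k n) (top a b (k n) (Q n)) <= supnorm a b K (k n) (Q n).
  case: (HM n) => hp _ _; rewrite /supnorm.
  case: (pselect (exists z, K z)) => [[z0 Kz0]|nK]; last first.
    have -> : K = set0 by apply/seteqP; split => // z Kz; exfalso; apply: nK; exists z.
    by rewrite !image_set0.
  apply: ge_sup; first by exists (cmod (peval a b (k n) (top a b (k n) (Q n)) z0)); exists z0.
  move=> _ [z Kz <-]; apply: top_le => // m.
  by apply: (ub_le_sup (ub _ _)); exists (@act R a b (k n) m z) => //; exact: K_act.
have Hinm n : inM a b (k n) (al n) (top a b (k n) (Q n)).
  case: (HM n) => hp h1 h2; split.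
  - move=> j l; rewrite /top; case: ifP => [/eqP -> _|_]; [exact: leqnn | by rewrite eqxx].
  - by rewrite /top (Htop n) eqxx h1.
  - by move=> j l; rewrite /top; case: ifP => _; [exact: h2 | rewrite eqxx].
have e0 n : 0 <= (k n)%:R^-1 :> R by rewrite invr_ge0 ler0n.
have Hgf n : powR (supnorm a b K (k n) (top a b (k n) (Q n))) (k n)%:R^-1 <=
             powR (supnorm a b K (k n) (Q n)) (k n)%:R^-1.
  apply: (ge0_ler_powR (e0 n)); [rewrite nnegrE; exact: Hge0 | rewrite nnegrE; exact: Hge0 | exact: (Hle n)].
split; [exact: Hinm | exact: Htop | exact: Hk | by split | ].
case: (pselect (exists L, is_tau a b K th L)) => [ex|nex].
  have Ht := xgetPex 0 ex.
  apply: (@squeeze_cvgr _ _ _ _ (fun n => Tch a b K (k n) (al n)) (fun n => powR (supnorm a b K (k n) (Q n)) (k n)%:R^-1) _ _ _ _ Hcv).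
    apply: filterE => n; rewrite Hgf andbT /Tch.
    apply: ge0_ler_powR; rewrite ?nnegrE //.
      apply: lb_le_inf; first by exists (supnorm a b K (k n) (top a b (k n) (Q n))); exists (top a b (k n) (Q n)); [exact: Hinm|].
      by move=> _ [p _ <-].
    apply: ge_inf; first by exists 0 => _ [p _ <-].
    by exists (top a b (k n) (Q n)); [exact: Hinm|].
  apply/cvgrPdist_lt => e ep.
  have [N [d d0 HN]] := Ht e ep.
  have [n0 Hn0] := Hk N.
  have h1 := (cvgrPdist_lt _ _).1 Hth1 _ d0.
  have h2 := (cvgrPdist_lt _ _).1 Hth2 _ d0.
  near=> n; rewrite distrC; apply: HN.
  - apply: Hn0; near: n; by exists n0.
  - exact: Htop.
  - by rewrite distrC; near: n; exact: h1.
  - by rewrite distrC; near: n; exact: h2.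
have -> : tau a b K th = 0 by rewrite /tau xgetPN // => L HL; apply: nex; exists L.
rewrite /tau xgetPN in Hcv; last by move=> L HL; apply: nex; exists L.
apply: (@squeeze_cvgr _ _ _ _ (fun n => 0) (fun n => powR (supnorm a b K (k n) (Q n)) (k n)%:R^-1) _ _ _ _ Hcv).
  by apply: filterE => n; rewrite Hgf andbT powR_ge0.
exact: cvg_cst.
Unshelve. all: by end_near.
Qed.
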